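(* For any sheaf $\mathcal F$ of finite-dimensional $\mathbb F$-vector spaces on a digraph $G$, $h_1^{\rm twist}(\mathcal F)\ge{\rm m.e.}(\mathcal F)$.
   Context: A digraph has finite vertex and edge sets with tail/head maps $t_G,h_G$. A sheaf $\mathcal F$ on $G$: finite-dimensional vector spaces $\mathcal F(P)$, $P\in V_G\sqcup E_G$, linear maps $\mathcal F(t,e)\colon\mathcal F(e)\to\mathcal F(t_Ge)$, $\mathcal F(h,e)\colon\mathcal F(e)\to\mathcal F(h_Ge)$; $\mathcal F(V)=\bigoplus_v\mathcal F(v)$, $\mathcal F(E)=\bigoplus_e\mathcal F(e)$; $d_h,d_t\colon\mathcal F(E)\to\mathcal F(V)$ send the summand $\mathcal F(e)$ into $\mathcal F(h_Ge)$ resp. $\mathcal F(t_Ge)$ via the restriction maps, $d=d_h-d_t$, $H_1=\ker d$. Twisting: with independent indeterminates $\psi(e)$, $e\in E_G$, $\mathcal F^\psi$ is the sheaf of $\mathbb F(\psi)$-vector spaces with values $\mathcal F(P)\otimes_{\mathbb F}\mathbb F(\psi)$, head maps $\mathcal F(h,e)$, tail maps $\psi(e)\mathcal F(t,e)$; $h_1^{\rm twist}(\mathcal F)=\dim_{\mathbb F(\psi)}H_1(\mathcal F^\psi)$. For $U\subset\mathcal F(V)$, $\Gamma_{\rm ht}(U)=\bigoplus_e\{w\in\mathcal F(e):d_hw\in U,d_tw\in U\}$, ${\rm excess}(\mathcal F,U)=\dim\Gamma_{\rm ht}(U)-\dim U$, ${\rm m.e.}(\mathcal F)=\max_U{\rm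 excess}(\mathcal F,U)$. *)

(* Defs.v *)
From HB Require Import structures.
From mathcomp Require Import all_boot all_order all_algebra.
Set Implicit Arguments. Unset Strict Implicit. Unset Printing Implicit Defensive.
Import Order.TTheory GRing.Theory Num.Theory.
Local Open Scope ring_scope.

(* A digraph with vertex set 'I_nV and edge set 'I_nE (any finite sets, up to
   relabelling), with tail and head maps. *)
Record digraph := Digraph {
  nV : nat; nE : nat;
  tl : 'I_nE -> 'I_nV;
  hd : 'I_nE -> 'I_nV }.

(* A sheaf of finite-dimensional F-vector spaces on G: F(v) = 'rV_(dimV v),
   F(e) = 'rV_(dimE e); restriction maps act on row vectors by right
   multiplication: w |-> w *m resT e  (F(e) -> F(t e)), w |-> w *m resH e. *)
Record sheaf (F : fieldType) (G : digraph) := Sheaf {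
  dimV : 'I_(nV G) -> nat;
  dimE : 'I_(nE G) -> nat;
  resT : forall e, 'M[F]_(dimE e, dimV (tl e));
  resH : forall e, 'M[F]_(dimE e, dimV (hd e)) }.

(* The (e,v) block of the map F(E) -> F(V) induced by the maps M e : F(e) -> F(f e):
   M e if f e = v, and 0 otherwise. *)
Definition blk (R : nzRingType) (nE nV : nat) (dE : 'I_nE -> nat)
  (dV : 'I_nV -> nat) (f : 'I_nE -> 'I_nV)
  (M : forall e, 'M[R]_(dE e, dV (f e))) (e : 'I_nE) (v : 'I_nV)
  : 'M[R]_(dE e, dV v) :=
  match f e =P v with
  | ReflectT pf => castmx (erefl, f_equal dV pf) (M e)
  | ReflectF _ => 0
  end.

Section SheafMaps.
Variables (F : fieldType) (G : digraph) (S : sheaf F G).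

Definition NV := (\sum_(v < nV G) dimV S v)%N.
Definition NE := (\sum_(e < nE G) dimE S e)%N.

(* restriction of d_h, d_t to the summand F(e):  F(e) -> F(V) = (+)_v F(v) *)
Definition dh_e (e : 'I_(nE G)) : 'M[F]_(dimE S e, NV) :=
  \mxrow_(v < nV G) blk (@resH F G S) e v.
Definition dt_e (e : 'I_(nE G)) : 'M[F]_(dimE S e, NV) :=
  \mxrow_(v < nV G) blk (@resT F G S) e v.

(* Gamma_ht(U) restricted to the summand F(e):
   { w in F(e) : d_h w \in U, d_t w \in U } *)
Definition Gamma_e (U : {vspace 'rV[F]_NV}) (e : 'I_(nE G))
  : {vspace 'rV[F]_(dimE S e)} :=
  ((linfun (mulmxr (dh_e e)) @^-1: U) :&: (linfun (mulmxr (dt_e e)) @^-1: U))%VS.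

(* dim Gamma_ht(U) = dim of the direct sum over e of Gamma_e(U) *)
Definition dim_Gamma_ht (U : {vspace 'rV[F]_NV}) : nat :=
  (\sum_(e < nE G) \dim (Gamma_e U e))%N.

Definition excess (U : {vspace 'rV[F]_NV}) : int :=
  (dim_Gamma_ht U)%:Z - (\dim U)%:Z.

End SheafMaps.

(* polyn F n = F[x_0, ..., x_{n-1}] built as iterated univariate polynomials. *)
Fixpoint polyn (F : fieldType) (n : nat) : idomainType :=
  match n with
  | 0 => F
  | m.+1 => ({poly polyn F m} : idomainType)
  end.

Fixpoint pconst (F : fieldType) (n : nat) : F -> polyn F n :=
  match n return F -> polyn F n with
  | 0 => fun a => a
  | m.+1 => fun a => (pconst m a)%:P
  end.

Fixpoint pvar (F : fieldType) (n : nat) : 'I_n -> polyn F n :=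
  match n return 'I_n -> polyn F n with
  | 0 => fun i => 0
  | m.+1 => fun i =>
      match unlift ord_max i with
      | Some j => (@pvar F m j)%:P
      | None => 'X
      end
  end.

Definition ratfun (F : fieldType) (n : nat) : fieldType := {fraction polyn F n}.

Definition rconst (F : fieldType) (n : nat) (a : F) : ratfun F n :=
  tofrac (pconst n a).
Definition rvar (F : fieldType) (n : nat) (i : 'I_n) : ratfun F n :=
  tofrac (pvar F i).

Section Twist.
Variables (F : fieldType) (G : digraph) (S : sheaf F G).

Local Notation K := (ratfun F (nE G)).
Definition psi (e : 'I_(nE G)) : K := rvar F e.

(* F^psi: head maps F(h,e), tail maps psi(e) F(t,e), tensored up to F(psi) *)
Definition twH e : 'M[K]_(dimE S e, dimV S (hd e)) := map_mx (@rconst F _) (resH S e).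
Definition twT e : 'M[K]_(dimE S e, dimV S (tl e)) :=
  psi e *: map_mx (@rconst F _) (resT S e).

Definition d_twist : 'M[K]_(NE S, NV S) :=
  \mxblock_(e < nE G, v < nV G) (blk twH e v - blk twT e v).

Definition d_twist_map : 'rV[K]_(NE S) -> 'rV[K]_(NV S) := mulmxr d_twist.
Definition h1_twist : nat := \dim (lker (linfun d_twist_map)).

End Twist.

(* Main.v *)
Require Import Defs.
From HB Require Import structures.
From mathcomp Require Import all_boot all_order all_algebra.
From mathcomp Require Import zify.
Import Order.TTheory GRing.Theory Num.Theory.
Local Open Scope ring_scope.
Set Implicit Arguments. Unset Strict Implicit.

Section Aux.
Variable R : fieldType.

Definition bmx n (W : {vspace 'rV[R]_n}) : 'M[R]_(\dim W, n) :=
  \matrix_(i < \dim W) (vbasis W)`_i.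

Lemma bmx_row n (W : {vspace 'rV[R]_n}) i : row i (bmx W) = (vbasis W)`_i.
Proof. by rewrite rowK. Qed.

Lemma bmx_free n (W : {vspace 'rV[R]_n}) : row_free (bmx W).
Proof.
apply: inj_row_free => v vB.
have /freeP Hf := basis_free (vbasisP W).
apply/rowP => i; rewrite mxE; apply: (Hf (fun j => v 0 j)).
rewrite -[RHS]vB mulmx_sum_row; apply: eq_bigr => j _; by rewrite bmx_row.
Qed.

Lemma bmx_rank n (W : {vspace 'rV[R]_n}) : \rank (bmx W) = \dim W.
Proof. by apply/eqP; apply: bmx_free. Qed.

Lemma bmx_sub n (W : {vspace 'rV[R]_n}) w : w \in W -> (w <= bmx W)%MS.
Proof.
move=> /coord_vbasis ->; apply/submxP.
exists (\row_i coord (vbasis W) i w); rewrite mulmx_sum_row.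
by apply: eq_bigr => j _; rewrite bmx_row mxE.
Qed.

Lemma bmx_mem n (W : {vspace 'rV[R]_n}) i : row i (bmx W) \in W.
Proof. by rewrite bmx_row; apply: vbasis_mem; apply: mem_nth; rewrite size_tuple. Qed.

Lemma rank_le_dim m n (M : 'M[R]_(m, n)) (V : {vspace 'rV[R]_n}) :
  row_free M -> (forall i, row i M \in V) -> (\rank M <= \dim V)%N.
Proof.
move=> fM MV.
pose X := [tuple row i M | i < m].
have fX : free X.
  apply/freeP => k Hk i.
  have : (\row_j k j) *m M = 0.
    rewrite mulmx_sum_row -[RHS]Hk; apply: eq_bigr => j _.
    by rewrite mxE -tnth_nth tnth_mktuple.
  move=> H; have := row_free_inj fM (etrans H (esym (mul0mx _ M))).
  move=> /rowP/(_ i).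
  by rewrite !mxE.
have -> : \rank M = \dim <<X>>%VS by rewrite (eqP fX) size_tuple (eqP fM).
apply: dimvS; apply/span_subvP => x /mapP [i _ ->]; exact: MV.
Qed.

End Aux.
Lemma pconstB (F : fieldType) n : zmod_morphism (@pconst F n).
Proof.
elim: n => [|n IH] a b //=.
by rewrite IH polyCB.
Qed.

Lemma pconstM (F : fieldType) n : monoid_morphism (@pconst F n).
Proof.
elim: n => [|n [IH1 IH2]] //=; split => //.
  by rewrite IH1.
by move=> a b; rewrite IH2 polyCM.
Qed.

Lemma rconstB (F : fieldType) n : zmod_morphism (@rconst F n).
Proof. by move=> a b; rewrite /rconst pconstB rmorphB. Qed.
Lemma rconstM (F : fieldType) n : monoid_morphism (@rconst F n).
Proof.
split; first by rewrite /rconst (@pconstM F n).1 rmorph1.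
by move=> a b; rewrite /rconst (@pconstM F n).2 rmorphM.
Qed.

HB.instance Definition _ (F : fieldType) n :=
  GRing.isZmodMorphism.Build F (ratfun F n) (@rconst F n) (@rconstB F n).
HB.instance Definition _ (F : fieldType) n :=
  GRing.isMonoidMorphism.Build F (ratfun F n) (@rconst F n) (@rconstM F n).

Section Main.
Variables (F : fieldType) (G : digraph) (S : sheaf F G).
Local Notation K := (ratfun F (nE G)).
Local Notation f := (@rconst F (nE G)).

Lemma blk_map (dE : 'I_(nE G) -> nat) (dV : 'I_(nV G) -> nat) (t : 'I_(nE G) -> 'I_(nV G))
  (M : forall e, 'M[F]_(dE e, dV (t e))) e v :
  blk (fun e => map_mx f (M e)) e v = map_mx f (blk M e v).
Proof. by rewrite /blk; case: eqP => [pf|_]; rewrite ?map_castmx ?map_mx0. Qed.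

Lemma blk_scale (dE : 'I_(nE G) -> nat) (dV : 'I_(nV G) -> nat) (t : 'I_(nE G) -> 'I_(nV G))
  (c : 'I_(nE G) -> K) (M : forall e, 'M[K]_(dE e, dV (t e))) e v :
  blk (fun e => c e *: M e) e v = c e *: blk M e v.
Proof.
rewrite /blk; case: eqP => [pf|_]; last by rewrite scaler0.
by apply/matrixP => i j; rewrite !castmxE !mxE castmxE.
Qed.

Lemma dtw_row e :
  \mxrow_v (blk (twH S) e v - blk (twT S) e v) =
  map_mx f (dh_e S e) - @psi F G e *: map_mx f (dt_e S e).
Proof.
have eH v : blk (twH S) e v = map_mx f (blk (@resH F G S) e v).
  exact: (blk_map (@resH F G S)).
have eT v : blk (twT S) e v = @psi F G e *: map_mx f (blk (@resT F G S) e v).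
  rewrite -(blk_map (@resT F G S)).
  exact: (blk_scale (@psi F G) (fun e => map_mx f (resT S e))).
apply/matrixP => i j; by rewrite !mxE eH eT !mxE.
Qed.


Lemma main_ineq (U : {vspace 'rV[F]_(NV S)}) :
  (dim_Gamma_ht U <= h1_twist S + \dim U)%N.
Proof.
set D := d_twist S.
pose g e := \dim (Gamma_e U e).
pose CE e : 'M[K]_(g e, dimE S e) := map_mx f (bmx (Gamma_e U e)).
pose P e : 'M[K]_(dimE S e, NE S) := submxcol (1%:M : 'M[K]_(NE S)) e.
pose C : 'M[K]_(\sum_e g e, NE S) := \mxcol_e (CE e *m P e).
pose BU := map_mx f (bmx U).
have CEfree e : row_free (CE e).
  by rewrite /row_free mxrank_map; apply: bmx_free.
have rankC : \rank C = (\sum_e g e)%N.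
  apply/eqP; apply: inj_row_free => v vC.
  rewrite -(submxrowK v) /C mul_mxrow_mxcol in vC *.
  have H e : submxrow v e *m CE e = 0.
    have : \mxrow_j (submxrow v j *m CE j) = 0.
      rewrite -[LHS]mulmx1 -(submxcolK (1%:M : 'M[K]_(NE S))) mul_mxrow_mxcol.
      by rewrite -[RHS]vC; apply: eq_bigr => j _; rewrite mulmxA.
    by move/(congr1 (fun M => submxrow M e)); rewrite mxrowK submxrow0.
  rewrite (eq_mxrow (B_ := fun j => 0)) ?mxrow0 // => j.
  by apply/eqP; rewrite -(mulmx_free_eq0 _ (CEfree j)) H.
have CDsub : (C *m D <= BU)%MS.
  apply/row_subP => k; rewrite /C mxcol_mul row_mxcol.
  move: (tagnat.sig1 k) (tagnat.sig2 k) => e i.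
  rewrite -mulmxA /P submxcol_mul mul1mx /D /d_twist mxblockEv mxcolK dtw_row.
  rewrite row_mul /CE -map_row mulmxBr -scalemxAr -!map_mxM.
  have := @bmx_mem _ _ (Gamma_e U e) i.
  move: (row i _) => w /memv_capP [].
  rewrite -!memv_preim !lfunE /= => wh wt.
  apply: addmx_sub; first by rewrite map_submx bmx_sub.
  rewrite -scaleNr; apply: scalemx_sub; rewrite map_submx; exact: bmx_sub.
have h1ge : (\rank (kermx D) <= h1_twist S)%N.
  rewrite -{1}(eq_row_base (kermx D)).
  apply: rank_le_dim; first exact: row_base_free.
  move=> i; rewrite memv_ker lfunE /= /d_twist_map /=.
  apply/eqP/sub_kermxP; apply: submx_trans (row_sub i _) _.
  by rewrite eq_row_base.
have := mxrank_mul_ker C D.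
have := mxrankS CDsub.
have := mxrankS (capmxSr C (kermx D)).
rewrite rankC /BU mxrank_map bmx_rank => h1 h2 h3.
have -> : dim_Gamma_ht U = (\sum_e g e)%N by [].
lia.
Qed.
End Main.

Unset Implicit Arguments.
Theorem lemma1 (F : fieldType) (G : digraph) (S : sheaf F G) :
  forall U : {vspace 'rV[F]_(NV S)}, excess U <= (h1_twist S)%:Z.
Proof.
move=> U; rewrite /excess lerBlDr -PoszD lez_nat.
exact: main_ineq.
Qed.
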